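(* Let $F\subseteq\omega$ be a $\Pi^1_1$ set. Then there exists a computable function $g$ such that for every $p\in\omega$, $g(p)$ is an $\iota$-index of a c.e. effective quasi-Polish space $X=\iota(g(p))$ such that $X$ is metrizable if $p\in F$, and $X$ is not $T_1$ if $p\notin F$.
   Context: Let $(W_n)$ be a standard numbering of c.e. subsets of $\omega$, $V_n=\{(i,j)\mid\langle i,j\rangle\in W_n\}$, and $t$ a computable function with $V_{t(n)}$ the transitive closure of $V_n$. For a transitive relation $\prec$ on $\omega$, an ideal is a non-empty lower, directed subset of $\omega$; $\mathcal{I}(\prec)$ is the space of ideals with topology generated by $[k]_\prec=\{I\mid k\in I\}$, an effective space with basic opens numbered by $k$. The numbering $\iota$ is defined by $\iota(n)=\mathcal{I}(V_{t(n)})$; an $\iota$-index of $X$ is an $n$ with $X=\iota(n)$. Every $\iota(n)$ is an effective quasi-Polish space; it is c.e. (overt) if $\{k\mid[k]_{V_{t(n)}}\neq\emptyset\}$ is c.e. *)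

(* Defs.v *)
From Stdlib Require Import Reals Relations List Lia.
Open Scope R_scope.

Definition pair (a b : nat) : nat := (((a + b) * (a + b + 1)) / 2 + b)%nat.

Inductive code : Type :=
| cZero : code
| cSucc : code
| cLeft : code
| cRight : code
| cPair : code -> code -> code
| cComp : code -> code -> code
| cPrec : code -> code -> code
| cMu : code -> code.

Inductive eval : code -> nat -> nat -> Prop :=
| ev_zero x : eval cZero x 0
| ev_succ x : eval cSucc x (S x)
| ev_left a b : eval cLeft (pair a b) a
| ev_right a b : eval cRight (pair a b) b
| ev_pair f g x a b : eval f x a -> eval g x b -> eval (cPair f g) x (pair a b)
| ev_comp f g x y z : eval g x y -> eval f y z -> eval (cComp f g) x z
| ev_prec0 f g a y : eval f a y -> eval (cPrec f g) (pair a 0) y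
| ev_precS f g a n i z :
    eval (cPrec f g) (pair a n) i -> eval g (pair a (pair n i)) z ->
    eval (cPrec f g) (pair a (S n)) z
| ev_mu f x n (m : nat -> nat) :
    eval f (pair x n) 0 ->
    (forall i, (i < n)%nat -> eval f (pair x i) (S (m i))) ->
    eval (cMu f) x n.

(* Goedel numbering of codes (injective); indices outside the range
   denote the nowhere-defined function. *)
Fixpoint encode (c : code) : nat :=
  match c with
  | cZero => 0 | cSucc => 1 | cLeft => 2 | cRight => 3
  | cPair f g => 4 * pair (encode f) (encode g) + 4
  | cComp f g => 4 * pair (encode f) (encode g) + 5
  | cPrec f g => 4 * pair (encode f) (encode g) + 6
  | cMu f => 4 * encode f + 7
  end%nat.

Definition phi (e x y : nat) : Prop := exists c, encode c = e /\ eval c x y.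

Definition W (n : nat) (x : nat) : Prop := exists y, phi n x y.

Definition computable_fun (g : nat -> nat) : Prop :=
  exists e, forall x, phi e x (g x).

Definition ce_set (A : nat -> Prop) : Prop :=
  exists e, forall x, A x <-> W e x.

Definition computable_pred (R : nat -> Prop) : Prop :=
  exists e, forall x, (R x -> phi e x 0) /\ (~ R x -> phi e x 1).

Fixpoint init_code (f : nat -> nat) (n : nat) : nat :=
  match n with
  | O => O
  | S k => S (pair (f k) (init_code f k))
  end.

(* Lightface Pi^1_1 (Kleene normal form):
   p in F  <->  forall f in Baire space, exists n, R(<p, code(f|n)>),
   with R computable. *)
Definition Pi11 (F : nat -> Prop) : Prop :=
  exists R : nat -> Prop, computable_pred R /\
    forall p, F p <-> forall f : nat -> nat, exists n, R (pair p (init_code f n)).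

Definition V (n : nat) (i j : nat) : Prop := W n (pair i j).

(* V_{t(n)} = transitive closure of V_n *)
Definition iota_rel (n : nat) : relation nat := clos_trans nat (V n).

Definition is_ideal (R : relation nat) (I : nat -> Prop) : Prop :=
  (exists k, I k) /\
  (forall a b, I b -> R a b -> I a) /\
  (forall a b, I a -> I b -> exists c, I c /\ R a c /\ R b c).

Definition ideal (R : relation nat) : Type := {I : nat -> Prop | is_ideal R I}.

Definition basic (R : relation nat) (k : nat) (x : ideal R) : Prop := proj1_sig x k.

(* topology generated by the sets [k]_R: unions of finite intersections *)
Definition is_open (R : relation nat) (U : ideal R -> Prop) : Prop :=
  forall x, U x -> exists ks : list nat,
    (forall k, In k ks -> basic R k x) /\
    (forall y, (forall k, In k ks -> basic R k y) -> U y).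

Definition T1 (R : relation nat) : Prop :=
  forall x y : ideal R, x <> y ->
    exists U, is_open R U /\ U x /\ ~ U y.

Definition is_metric {X : Type} (d : X -> X -> R) : Prop :=
  (forall x y, 0 <= d x y) /\
  (forall x y, d x y = 0 <-> x = y) /\
  (forall x y, d x y = d y x) /\
  (forall x y z, d x z <= d x y + d y z).

Definition metrizable (Rl : relation nat) : Prop :=
  exists d : ideal Rl -> ideal Rl -> R, is_metric d /\
    forall U : ideal Rl -> Prop,
      is_open Rl U <->
      (forall x, U x -> exists eps, 0 < eps /\ forall y, d x y < eps -> U y).

(* iota(n) is c.e. (overt): {k | [k] nonempty} is c.e. *)
Definition ce_space (n : nat) : Prop :=
  ce_set (fun k => exists x : ideal (iota_rel n), basic (iota_rel n) k x).

(* Main.v *)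
Require Import Defs.
From Stdlib Require Import Reals Relations List Lia Arith.
From Stdlib Require Import Classical IndefiniteDescription FunctionalExtensionality PropExtensionality ProofIrrelevance.
Open Scope nat_scope.

Lemma pair_S0 b : pair (S b) 0 = S (pair 0 b).
Proof.
  unfold pair.
  replace ((S b + 0) * (S b + 0 + 1)) with (b*(b+1) + (b+1)*2) by nia.
  rewrite Nat.div_add by lia. replace (0+b) with b by lia. lia.
Qed.

Lemma pair_aS a b : pair a (S b) = S (pair (S a) b).
Proof. unfold pair. replace (a + S b) with (S a + b) by lia. lia. Qed.

Fixpoint unpair (n:nat) : nat*nat :=
  match n with
  | 0 => (0,0)
  | S m => let (a,b) := unpair m in
           match a with 0 => (S b, 0) | S a' => (a', S b) end
  end.

Lemma unpair_pair_aux n : forall b a, a + b = n -> unpair (pair a b) = (a,b).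
Proof.
  induction n as [n IHn] using lt_wf_ind.
  induction b as [|b IHb]; intros a Hab.
  - destruct a as [|a].
    + reflexivity.
    + rewrite pair_S0. simpl. rewrite (IHn a) by lia. reflexivity.
  - rewrite pair_aS. simpl. rewrite (IHb (S a)) by lia. reflexivity.
Qed.

Lemma unpair_pair a b : unpair (pair a b) = (a,b).
Proof. apply (unpair_pair_aux (a+b)); lia. Qed.

Lemma pair_inj a b c d : pair a b = pair c d -> a = c /\ b = d.
Proof. intro H. assert (unpair (pair a b) = unpair (pair c d)) by (rewrite H; auto).
  rewrite !unpair_pair in H0. inversion H0; auto. Qed.

Lemma pair_unpair n : pair (fst (unpair n)) (snd (unpair n)) = n.
Proof.
  induction n as [|n IH]. reflexivity.
  simpl. destruct (unpair n) as [a b]. simpl in IH.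
  destruct a as [|a]; simpl.
  - rewrite pair_S0. now rewrite IH.
  - rewrite pair_aS. now rewrite IH.
Qed.

Definition unL x := fst (unpair x).
Definition unR x := snd (unpair x).
Lemma unL_pair a b : unL (pair a b) = a. Proof. unfold unL; now rewrite unpair_pair. Qed.
Lemma unR_pair a b : unR (pair a b) = b. Proof. unfold unR; now rewrite unpair_pair. Qed.
Lemma pair_surj x : exists a b, x = pair a b.
Proof. exists (unL x), (unR x). unfold unL, unR. now rewrite pair_unpair. Qed.
Lemma pair_ge_r a b : b <= pair a b. Proof. unfold pair. lia. Qed.
Lemma unR_le x : unR x <= x.
Proof. destruct (pair_surj x) as [a [b ->]]. rewrite unR_pair. apply pair_ge_r. Qed.

Lemma eval_det c : forall x y y', eval c x y -> eval c x y' -> y = y'.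
Proof.
  induction c; intros x y y' H H'.
  - inversion H; inversion H'; subst; auto.
  - inversion H; inversion H'; subst; auto.
  - inversion H; subst. inversion H'; subst.
    match goal with E : Defs.pair _ _ = Defs.pair _ _ |- _ => apply pair_inj in E; destruct E; subst; auto end.
  - inversion H; subst. inversion H'; subst.
    match goal with E : Defs.pair _ _ = Defs.pair _ _ |- _ => apply pair_inj in E; destruct E; subst; auto end.
  - inversion H; subst. inversion H'; subst. f_equal; eauto.
  - inversion H; subst. inversion H'; subst.
    match goal with A : eval c2 x ?u, B : eval c2 x ?v |- _ => assert (u = v) by eauto; subst end.
    eauto.
  - assert (forall n a y y', eval (cPrec c1 c2) (pair a n) y -> eval (cPrec c1 c2) (pair a n) y' -> y = y') as K.
    { induction n; intros a y0 y0' H0 H0'.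
      - inversion H0; subst; match goal with E : Defs.pair _ _ = Defs.pair _ _ |- _ => apply pair_inj in E; destruct E; subst; try discriminate end;
        inversion H0'; subst; match goal with E : Defs.pair _ _ = Defs.pair _ _ |- _ => apply pair_inj in E; destruct E; subst; try discriminate end.
        eauto.
      - inversion H0; subst; match goal with E : Defs.pair _ _ = Defs.pair _ _ |- _ => apply pair_inj in E; destruct E; subst; try discriminate end;
        inversion H0'; subst; match goal with E : Defs.pair _ _ = Defs.pair _ _ |- _ => apply pair_inj in E; destruct E; subst; try discriminate end.
        injection H2 as ->. injection H3 as ->.
        assert (i = i0) by eauto. subst. eauto. }
    destruct (pair_surj x) as [a [n ->]]. eapply K; eauto.
  - inversion H; subst. inversion H'; subst.
    destruct (Nat.lt_trichotomy y y') as [Hl|[Hl|Hl]]; auto.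
    + specialize (H4 _ Hl). assert (0 = S (m0 y)) by eauto. discriminate.
    + specialize (H2 _ Hl). assert (0 = S (m y')) by eauto. discriminate.
Qed.

Lemma encode_inj c : forall c', encode c = encode c' -> c = c'.
Proof.
  induction c; destruct c'; simpl; intros E; try lia; auto.
  all: try (assert (P: pair (encode c1) (encode c2) = pair (encode c'1) (encode c'2)) by lia;
    apply pair_inj in P; destruct P as [P1 P2]; apply IHc1 in P1; apply IHc2 in P2; subst; auto).
  assert (encode c = encode c') by lia. f_equal; auto.
Qed.

Lemma phi_encode c x y : phi (encode c) x y <-> eval c x y.
Proof. split. intros [c' [E H]]. apply encode_inj in E. subst. auto.
  intros H. exists c. auto. Qed.


Definition computes c (F : nat -> nat) := forall x, eval c x (F x).
Lemma computes_ext c F G : computes c F -> (forall x, F x = G x) -> computes c G.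
Proof. intros H E x. rewrite <- E. apply H. Qed.
Lemma c_zero : computes cZero (fun _ => 0). Proof. intro; constructor. Qed.
Lemma c_succ : computes cSucc S. Proof. intro; constructor. Qed.
Lemma c_left : computes cLeft unL.
Proof. intro x. destruct (pair_surj x) as [a [b ->]]. rewrite unL_pair. constructor. Qed.
Lemma c_right : computes cRight unR.
Proof. intro x. destruct (pair_surj x) as [a [b ->]]. rewrite unR_pair. constructor. Qed.
Lemma c_pair f g F G : computes f F -> computes g G -> computes (cPair f g) (fun x => pair (F x) (G x)).
Proof. intros H1 H2 x. constructor; auto. Qed.
Lemma c_comp f g F G : computes f F -> computes g G -> computes (cComp f g) (fun x => F (G x)).
Proof. intros H1 H2 x. econstructor; eauto. Qed.
Fixpoint prim (F G : nat -> nat) (a n : nat) : nat :=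
  match n with 0 => F a | S m => G (pair a (pair m (prim F G a m))) end.
Lemma c_prec f g F G : computes f F -> computes g G ->
  computes (cPrec f g) (fun x => prim F G (unL x) (unR x)).
Proof. intros H1 H2 x. destruct (pair_surj x) as [a [n ->]]. rewrite unL_pair, unR_pair.
  induction n; simpl. constructor; auto. econstructor; eauto. Qed.

Definition op2 h f g := cComp h (cPair f g).
Lemma c_op2 h f g H F G : computes h H -> computes f F -> computes g G ->
  computes (op2 h f g) (fun x => H (pair (F x) (G x))).
Proof. intros. unfold op2. apply c_comp; auto. apply c_pair; auto. Qed.

Global Hint Resolve c_zero c_succ c_left c_right c_pair c_comp c_prec c_op2 : cmp.

Ltac sp := repeat (first [rewrite unL_pair | rewrite unR_pair]).
Ltac cmp_by spec := eapply computes_ext; [ eauto 20 with cmp | ].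

Definition ID := cPair cLeft cRight.
Lemma c_ID : computes ID (fun x => x).
Proof. eapply computes_ext. apply c_pair; [apply c_left|apply c_right].
  intros. unfold unL, unR. apply pair_unpair. Qed.
Global Hint Resolve c_ID : cmp.

Fixpoint constc n := match n with 0 => cZero | S k => cComp cSucc (constc k) end.
Lemma c_const n : computes (constc n) (fun _ => n).
Proof. induction n; intro x; simpl. constructor. econstructor; eauto. constructor. Qed.
Global Hint Resolve c_const : cmp.

Fixpoint addc k := match k with 0 => ID | S k => cComp cSucc (addc k) end.
Lemma c_addc k : computes (addc k) (fun x => k + x).
Proof. induction k; intro x; simpl. apply c_ID. econstructor; eauto. constructor. Qed.
Global Hint Resolve c_addc : cmp.

Definition ADD := cPrec ID (cComp cSucc (cComp cRight cRight)).
Lemma c_ADD : computes ADD (fun x => unL x + unR x).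
Proof. eapply computes_ext. unfold ADD. eauto 20 with cmp.
  intros x. cbn beta. generalize (unL x) (unR x). intros a n. induction n; simpl; auto.
  sp. lia. Qed.
Global Hint Resolve c_ADD : cmp.

Definition PRED := cComp (cPrec cZero (cComp cLeft cRight)) (cPair cZero ID).
Lemma c_PRED : computes PRED pred.
Proof. eapply computes_ext. unfold PRED. eauto 20 with cmp.
  intros x. cbn beta. rewrite unL_pair, unR_pair. destruct x; simpl; auto.
  rewrite unR_pair, unL_pair. auto. Qed.
Global Hint Resolve c_PRED : cmp.

Definition SUB := cPrec ID (cComp PRED (cComp cRight cRight)).
Lemma c_SUB : computes SUB (fun x => unL x - unR x).
Proof. eapply computes_ext. unfold SUB. eauto 20 with cmp.
  intros x. cbn beta. generalize (unL x) (unR x). intros a n. induction n; simpl; auto.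
  lia. sp. lia. Qed.
Global Hint Resolve c_SUB : cmp.

Definition MUL := cPrec cZero (op2 ADD cLeft (cComp cRight cRight)).
Lemma c_MUL : computes MUL (fun x => unL x * unR x).
Proof. eapply computes_ext. unfold MUL. eauto 20 with cmp.
  intros x. cbn beta. generalize (unL x) (unR x). intros a n. induction n; simpl; auto.
  sp. lia. Qed.
Global Hint Resolve c_MUL : cmp.

Definition lin k := cComp (addc k) (cComp (op2 ADD ID ID) (op2 ADD ID ID)).
Lemma c_lin k : computes (lin k) (fun x => 4 * x + k).
Proof. eapply computes_ext. unfold lin. eauto 20 with cmp.
  intros x. cbn beta. sp. lia. Qed.
Global Hint Resolve c_lin : cmp.

Fixpoint quote c := match c with
 | cZero => cZero | cSucc => constc 1 | cLeft => constc 2 | cRight => constc 3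
 | cPair f g => cComp (lin 4) (cPair (quote f) (quote g))
 | cComp f g => cComp (lin 5) (cPair (quote f) (quote g))
 | cPrec f g => cComp (lin 6) (cPair (quote f) (quote g))
 | cMu f => cComp (lin 7) (quote f) end.
Lemma c_quote c : computes (quote c) (fun _ => encode c).
Proof. induction c; simpl; eapply computes_ext; eauto 20 with cmp; intros; simpl; sp; lia. Qed.

Definition CE := cComp (cPrec cZero (cComp (lin 5) (cPair (constc 1) (cComp cRight cRight)))) (cPair cZero ID).
Lemma c_CE : computes CE (fun p => encode (constc p)).
Proof. eapply computes_ext. unfold CE. eauto 20 with cmp.
  intros p. cbn beta. sp. induction p; simpl; auto. sp. simpl in IHp. rewrite IHp. lia. Qed.

Definition Cp M p := cComp M (cPair (constc p) ID).
Definition Gc M := cComp (lin 5) (cPair (quote M) (cComp (lin 4) (cPair CE (quote ID)))).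
Lemma c_G M : computes (Gc M) (fun p => encode (Cp M p)).
Proof. eapply computes_ext. unfold Gc. pose proof (c_quote M). pose proof (c_quote ID).
  pose proof c_CE. eauto 20 with cmp.
  intros p. cbn beta. simpl. lia. Qed.

Lemma Cp_halt M p x : (exists y, eval (Cp M p) x y) <-> exists y, eval M (pair p x) y.
Proof. split.
  - intros [y H]. inversion H; subst. inversion H2; subst.
    assert (a = p) by (eapply eval_det; eauto; apply c_const).
    assert (b = x) by (eapply eval_det; eauto; apply c_ID). subst. eauto.
  - intros [y H]. exists y. econstructor; eauto. constructor. apply c_const. apply c_ID.
Qed.

Lemma mu_halt f F z : computes f F -> (forall n, F (pair z n) = F (pair z 0)) ->
  ((exists y, eval (cMu f) z y) <-> F (pair z 0) = 0).
Proof. intros Hc Hn. split.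
  - intros [y H]. inversion H; subst. rewrite <- (Hn y). eapply eval_det; eauto.
  - intros E. exists 0. apply (ev_mu f z 0 (fun _ => 0)). pattern 0 at 2. rewrite <- E. apply Hc. intros; lia.
Qed.

Definition back s := unR (pred s).
Lemma back_le s : back s <= pred s. Proof. apply unR_le. Qed.
Lemma iter_back_0 k : forall t, t <= k -> Nat.iter k back t = 0.
Proof. induction k; intros t Ht. simpl; lia.
  rewrite Nat.iter_succ_r. apply IHk. pose proof (back_le t). lia. Qed.
Lemma back_code x s : back (S (pair x s)) = s.
Proof. unfold back. simpl. apply unR_pair. Qed.

Definition BACK := cComp cRight PRED.
Lemma c_BACK : computes BACK back. Proof. eapply computes_ext. unfold BACK. eauto with cmp. reflexivity. Qed.
Global Hint Resolve c_BACK : cmp.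
Definition ITB := cPrec ID (cComp BACK (cComp cRight cRight)).
Lemma c_ITB : computes ITB (fun x => Nat.iter (unR x) back (unL x)).
Proof. eapply computes_ext. unfold ITB. eauto 20 with cmp.
  intros x. cbn beta. generalize (unL x) (unR x). intros a n. induction n; simpl; auto.
  sp. now rewrite IHn. Qed.
Global Hint Resolve c_ITB : cmp.

Fixpoint sumh (rf : nat -> nat) p t n := match n with 0 => 0 | S m =>
  sumh rf p t m + (1 - rf (pair p (Nat.iter m back t))) end.

Definition Hc cR := op2 SUB (constc 1) (cComp cR (cPair (cComp cLeft cLeft) (op2 ITB (cComp cRight cLeft) cRight))).
Definition SUMc cR := cPrec cZero (op2 ADD (cComp cRight cRight) (op2 (Hc cR) cLeft (cComp cLeft cRight))).
Definition BADc cR := op2 (SUMc cR) ID (cComp cSucc cRight).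
Lemma c_BADc cR rf : computes cR rf -> computes (BADc cR) (fun x => sumh rf (unL x) (unR x) (S (unR x))).
Proof. intro HR. eapply computes_ext. unfold BADc, SUMc, Hc. eauto 30 with cmp.
  intros x. cbn beta. sp. generalize (S (unR x)). intro n. induction n; simpl; auto.
  sp. rewrite IHn. auto. Qed.

Definition DIST := op2 ADD SUB (op2 SUB cRight cLeft).
Definition Jc := cComp cRight cRight.
Definition Ic := cComp cLeft cRight.
Definition Ec cR := op2 ADD (op2 ADD (op2 SUB (constc 2) Jc)
   (op2 DIST Ic (cComp cSucc (cComp cRight (op2 SUB Jc (constc 2))))))
   (op2 (BADc cR) cLeft (op2 SUB Jc (constc 1))).
Definition Vc cR := op2 MUL Jc (Ec cR).
Definition Mc cR := cMu (cComp (Vc cR) cLeft).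

Definition Espec rf p i j := (2 - j) + ((i - S (unR (j-2))) + (S (unR (j-2)) - i)) + sumh rf p (j-1) (S (j-1)).

Lemma c_Vc cR rf : computes cR rf -> computes (Vc cR)
  (fun z => unR (unR z) * Espec rf (unL z) (unL (unR z)) (unR (unR z))).
Proof. intro HR. pose proof (c_BADc cR rf HR). eapply computes_ext.
  unfold Vc, Ec, DIST, Jc, Ic. eauto 40 with cmp.
  intros x. cbn beta. sp. unfold Espec. reflexivity. Qed.

Definition goodR (rf : nat -> nat) p t := forall k, rf (pair p (Nat.iter k back t)) <> 0.
Definition Rel rf p i j := j = 0 \/ (2 <= j /\ i = S (unR (j-2)) /\ goodR rf p (j-1)).

Lemma sumh_0 rf p t n : sumh rf p t n = 0 <-> forall k, k < n -> rf (pair p (Nat.iter k back t)) <> 0.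
Proof. induction n; cbn [sumh]. split; intros; lia.
  split. intros H k Hk. assert (k < n \/ k = n) as [Hk1|Hk1] by lia. apply (proj1 IHn); auto; lia. subst k. lia.
  intros H. assert (sumh rf p t n = 0) by (apply IHn; auto). specialize (H n). lia. Qed.

Lemma good_iff rf p t : sumh rf p t (S t) = 0 <-> goodR rf p t.
Proof. rewrite sumh_0. unfold goodR. split; intros H k; auto.
  destruct (Nat.le_gt_cases k t). apply H; lia.
  assert (E: Nat.iter k back t = Nat.iter t back t) by (rewrite !iter_back_0; lia). rewrite E. apply H; lia.
  Qed.

Lemma M_halt cR rf p i j : computes cR rf ->
  ((exists y, eval (Mc cR) (pair p (pair i j)) y) <-> Rel rf p i j).
Proof. intro HR. unfold Mc. rewrite mu_halt.
  2:{ eapply c_comp. apply c_Vc; eauto. apply c_left. }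
  2:{ intros n. cbn beta. sp. reflexivity. }
  cbn beta. sp. unfold Rel, Espec. rewrite <- good_iff. split.
  intros H. apply Nat.eq_mul_0 in H. lia.
  intros H. apply Nat.eq_mul_0. lia.
Qed.

Lemma unR0 : unR 0 = 0. Proof. reflexivity. Qed.
Lemma good_back rf p t : goodR rf p t -> goodR rf p (back t).
Proof. intros H k. rewrite <- Nat.iter_succ_r. apply H. Qed.
Lemma iter_ic f k : forall n, Nat.iter k back (init_code f n) = init_code f (n - k).
Proof. induction k; intros n. simpl. f_equal; lia.
  rewrite Nat.iter_succ_r.
  assert (E: back (init_code f n) = init_code f (n-1)).
  { destruct n as [|m]. reflexivity. simpl init_code. rewrite back_code. f_equal. lia. }
  rewrite E, IHk. f_equal. lia. Qed.

Lemma ct_first (Q : relation nat) a c : clos_trans nat Q a c -> exists a', Q a a' /\ (a' = c \/ clos_trans nat Q a' c).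
Proof. intro H. apply clos_trans_t1n_iff in H. destruct H as [y Hy|y z Hy Hz].
  exists y; auto. exists y. split; auto. right. apply clos_trans_t1n_iff; auto. Qed.


Lemma full_ideal (Q : relation nat) : (forall k, Q k 0) -> is_ideal (clos_trans nat Q) (fun _ => True).
Proof. intros H0. split; [exists 0; auto|split; auto].
  intros a b _ _. exists 0. split; auto. split; apply t_step; auto. Qed.

Lemma contains0 rf p (Q : relation nat) (HQ : forall i j, Q i j <-> Rel rf p i j)
  (HF : forall f, exists n, rf (pair p (init_code f n)) = 0) :
  forall I, is_ideal (clos_trans nat Q) I -> I 0.
Proof.
  intros I [Hne [Hlow Hdir]].
  destruct (Classical_Prop.classic (I 0)) as [H0|H0]; auto. exfalso.
  assert (S1: forall a, I a -> exists c, I c /\ Q a c).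
  { intros a Ha. destruct (Hdir a a Ha Ha) as [c [Hc [Hac _]]].
    destruct (ct_first Q a c Hac) as [a' [Q1 [->|Q2]]]. eauto.
    exists a'. split; auto. eapply Hlow; eauto. }
  assert (S2: forall a c, I c -> Q a c -> 2 <= c /\ a = S (unR (c-2)) /\ goodR rf p (c-1)).
  { intros a c Hc Qac. apply HQ in Qac. destruct Qac as [->|H]; tauto. }
  assert (S3: forall a, I a -> exists s, a = S s /\ goodR rf p s).
  { intros a Ha. destruct (S1 a Ha) as [c [Hc Qac]]. destruct (S2 a c Hc Qac) as [Hc2 [Ea Hg]].
    exists (unR (c-2)). split; auto. apply good_back in Hg.
    unfold back in Hg. replace (pred (c-1)) with (c-2) in Hg by lia. auto. }
  assert (S4: forall s, I (S s) -> I 1).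
  { induction s as [s IH] using lt_wf_ind. intros Hs. destruct s as [|s']; auto.
    destruct (S3 _ Hs) as [s0 [E Hg]]. injection E as <-.
    apply (IH (back (S s'))). pose proof (back_le (S s')). simpl in H. lia.
    eapply Hlow. apply Hs. apply t_step. apply HQ. right.
    split. lia. split. unfold back. f_equal. f_equal. lia. replace (S (S s') - 1) with (S s') by lia. auto. }
  assert (I1 : I 1).
  { destruct Hne as [k Hk]. destruct (S3 k Hk) as [s [-> _]]. eauto. }
  assert (Hch: forall a, exists c, I a -> I c /\ Q a c).
  { intros a. destruct (Classical_Prop.classic (I a)) as [Ha|Ha].
    destruct (S1 a Ha) as [c Hc]. exists c; auto. exists 0. tauto. }
  pose (nx := fun a => proj1_sig (IndefiniteDescription.constructive_indefinite_description _ (Hch a))).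
  assert (Hnx : forall a, I a -> I (nx a) /\ Q a (nx a)).
  { intros a. unfold nx. destruct (IndefiniteDescription.constructive_indefinite_description _ (Hch a)). simpl. auto. }
  pose (node := fun n => Nat.iter n nx 1).
  assert (Inode : forall n, I (node n)).
  { induction n. exact I1. simpl. apply Hnx. exact IHn. }
  pose (f := fun n => unL (node (S n) - 2)).
  assert (Enode : forall n, node n = S (init_code f n)).
  { induction n. reflexivity.
    assert (node (S n) = nx (node n)) as E by reflexivity.
    destruct (Hnx _ (Inode n)) as [Ic Qc].
    destruct (S2 _ _ Ic Qc) as [Hc2 [Ea _]]. rewrite <- E in *.
    rewrite IHn in Ea. injection Ea as Ea.
    change (node (S n) = S (S (pair (f n) (init_code f n)))).
    rewrite Ea. unfold f; cbn beta.
    assert (P: pair (unL (node (S n) - 2)) (unR (node (S n) - 2)) = node (S n) - 2) by (unfold unL, unR; apply pair_unpair).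
    change (nx (node n)) with (node (S n)). rewrite P. lia. }
  destruct (HF f) as [n Hn].
  destruct (S3 _ (Inode n)) as [s [Es Hg]]. rewrite Enode in Es. injection Es as <-.
  apply (Hg 0). exact Hn.
Qed.

Lemma path_ideal rf p (Q : relation nat) (HQ : forall i j, Q i j <-> Rel rf p i j)
  f (Hf : forall n, rf (pair p (init_code f n)) <> 0) :
  is_ideal (clos_trans nat Q) (fun k => exists n, k = S (init_code f n)).
Proof.
  assert (G: forall n, goodR rf p (init_code f n)).
  { intros n k. rewrite iter_ic. apply Hf. }
  assert (St: forall n, Q (S (init_code f n)) (S (init_code f (S n)))).
  { intros n. apply HQ. right. cbn [init_code]. split. lia. split.
    replace (S (S (pair (f n) (init_code f n))) - 2) with (pair (f n) (init_code f n)) by lia.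
    rewrite unR_pair. auto.
    replace (S (S (pair (f n) (init_code f n))) - 1) with (init_code f (S n)) by (simpl; lia). apply G. }
  assert (Ch: forall n d, clos_trans nat Q (S (init_code f n)) (S (init_code f (n + d + 1)))).
  { intros n d. induction d. replace (n+0+1) with (S n) by lia. apply t_step, St.
    eapply t_trans. apply IHd. replace (n + S d + 1) with (S (n + d + 1)) by lia. apply t_step, St. }
  split; [exists 1, 0; auto|split].
  - intros a b Hb Hab. revert Hb. induction Hab as [a b Qab|a b c _ IH1 _ IH2]; auto.
    intros [n ->]. apply HQ in Qab. destruct Qab as [E|[Hc2 [Ea _]]]. discriminate.
    destruct n as [|m]. cbn [init_code] in Hc2. lia.
    exists m. rewrite Ea. cbn [init_code].
    replace (S (S (pair (f m) (init_code f m))) - 2) with (pair (f m) (init_code f m)) by lia.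
    rewrite unR_pair. auto.
  - intros a b [n ->] [m ->]. exists (S (init_code f (Nat.max n m + 1))).
    split. eauto. split.
    replace (Nat.max n m + 1) with (n + (Nat.max n m - n) + 1) by lia. apply Ch.
    replace (Nat.max n m + 1) with (m + (Nat.max n m - m) + 1) by lia. apply Ch.
Qed.

Lemma em_inf (P : Prop) : {P} + {~ P}.
Proof.
  destruct (constructive_indefinite_description (fun b : bool => if b then P else ~ P)) as [b Hb].
  { destruct (classic P); [exists true | exists false]; auto. }
  destruct b; auto.
Qed.

From Stdlib Require Import Lra.

Theorem theorem25 (F : nat -> Prop) (HF : Pi11 F) :
  exists g : nat -> nat, computable_fun g /\
    forall p : nat,
      ce_space (g p) /\
      (F p -> metrizable (iota_rel (g p))) /\
      (~ F p -> ~ T1 (iota_rel (g p))).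
Proof.
  destruct HF as [R [[e He] HR]].
  assert (exists cR, encode cR = e) as [cR EcR].
  { destruct (classic (R 0)) as [H|H];
      [destruct (proj1 (He 0) H) as [c [E _]] | destruct (proj2 (He 0) H) as [c [E _]]]; eauto. }
  pose (rf := fun x => if em_inf (R x) then 0 else 1).
  assert (HcR : computes cR rf).
  { intro x. unfold rf. destruct (em_inf (R x)) as [H|H];
      [destruct (proj1 (He x) H) as [c [E Hc]] | destruct (proj2 (He x) H) as [c [E Hc]]];
      rewrite <- EcR in E; apply encode_inj in E; subst; auto. }
  assert (Rrf : forall x, R x <-> rf x = 0).
  { intro x. unfold rf. destruct (em_inf (R x)); split; intros; auto; try discriminate; contradiction. }
  exists (fun p => encode (Cp (Mc cR) p)).
  split.
  { exists (encode (Gc (Mc cR))). intro x. apply phi_encode. apply c_G. }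
  intros p.
  set (n := encode (Cp (Mc cR) p)).
  assert (HQ : forall i j, V n i j <-> Rel rf p i j).
  { intros i j. unfold V, W. rewrite <- (M_halt cR rf p i j HcR). rewrite <- Cp_halt.
    split; intros [y H]; exists y; apply phi_encode; auto. }
  assert (Q0 : forall k, V n k 0) by (intro; apply HQ; left; auto).
  pose (full := exist (is_ideal (iota_rel n)) (fun _ => True) (full_ideal _ Q0) : ideal (iota_rel n)).
  split; [|split].
  - exists (encode cZero). intro k. split; intros _.
    + exists 0. apply phi_encode. constructor.
    + exists full. unfold basic; simpl; auto.
  - intro Fp.
    assert (HF' : forall f, exists m, rf (pair p (init_code f m)) = 0).
    { intro f. destruct (proj1 (HR p) Fp f) as [m Hm]. exists m. apply Rrf; auto. }
    assert (allfull : forall x : ideal (iota_rel n), x = full).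
    { intros [I HI]. pose proof (contains0 rf p (V n) HQ HF' I HI) as H0.
      assert (I = fun _ => True).
      { apply functional_extensionality. intro k. apply propositional_extensionality.
        split; auto. intros _. destruct HI as [_ [Hlow _]]. eapply Hlow; eauto. apply t_step, Q0. }
      subst I. unfold full. f_equal. apply proof_irrelevance. }
    exists (fun _ _ => 0%R). split.
    + split; [|split; [|split]]; intros; try lra.
      split; intros; auto. rewrite (allfull x), (allfull y); auto.
    + intros U. split.
      * intros HU x Ux. exists 1%R. split. lra. intros y _. rewrite (allfull y), <- (allfull x). auto.
      * intros HU x Ux. exists nil. split. intros k []. intros y _. rewrite (allfull y), <- (allfull x). auto.
  - intros nFp HT1.
    assert (exists f, forall m, rf (pair p (init_code f m)) <> 0) as [f Hf].
    { destruct (classic (exists f, forall m, rf (pair p (init_code f m)) <> 0)) as [H|H]; auto.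
      exfalso. apply nFp. apply HR. intro f. apply NNPP. intro Hn. apply H. exists f.
      intros m Hm. apply Hn. exists m. apply Rrf. auto. }
    pose (A := exist (is_ideal (iota_rel n)) _ (path_ideal rf p (V n) HQ f Hf) : ideal (iota_rel n)).
    destruct (HT1 A full) as [U [HU [UA nUfull]]].
    { intro E. assert (proj1_sig A 0) as H0 by (rewrite E; simpl; auto). simpl in H0.
      destruct H0 as [m Hm]. discriminate. }
    destruct (HU A UA) as [ks [_ Hks]]. apply nUfull. apply Hks. intros; unfold basic; simpl; auto.
Qed.
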